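(* Let $p$ be a prime number, $N\ge 1$ and $n\ge 0$ integers, and $t=\mathrm{ord}_p(N-1)$. Then $$\prod_{k=0}^{n}\frac{(N+k)!}{N!}\,B_{N,n}\equiv \prod_{k=0}^{n}(1+k)!\ B_n \pmod{p^t}.$$
   Context: For a positive integer $N$, the hypergeometric Bernoulli numbers $B_{N,n}$ are defined by $\frac{x^N/N!}{e^x-\sum_{n=0}^{N-1}x^n/n!}=\sum_{n\ge0} B_{N,n}\frac{x^n}{n!}$, and the classical Bernoulli numbers $B_n$ by $\frac{x}{e^x-1}=\sum_{n\ge0}B_n\frac{x^n}{n!}$ (so $B_n=B_{1,n}$). $\mathrm{ord}_p$ denotes the $p$-adic valuation on $\mathbb{Q}$ (with $\mathrm{ord}_p(0)=\infty$); for rationals $a,b$, $a\equiv b\pmod{p^t}$ means $\mathrm{ord}_p(a-b)\ge t$. *)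

(* Defs.v *)
From mathcomp Require Import all_boot all_order all_algebra.
Set Implicit Arguments. Unset Strict Implicit. Unset Printing Implicit Defensive.
Import Order.TTheory GRing.Theory Num.Theory.
Local Open Scope ring_scope.

(* [is_hbern N B] : B n = B_{N,n} for all n, i.e. the exponential generating
   function of B satisfies
     (x^N/N!) = (e^x - sum_{n<N} x^n/n!) * sum_n B n x^n/n!.
   Since e^x - sum_{n<N} x^n/n! = sum_{m>=0} x^(N+m)/(N+m)!, comparing the
   coefficients of x^(N+j) (all lower coefficients vanish on both sides)
   this identity of formal power series is literally:
     for all j, sum_{n=0}^{j} B n / ((N+j-n)! n!) = [j = 0] / N!. *)
Definition is_hbern (N : nat) (B : nat -> rat) : Prop :=
  forall j : nat,
    \sum_(n < j.+1) B n / (((N + (j - n))`!)%:R * (n`!)%:R)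
    = (j == 0%N)%:R / (N`!)%:R.

Definition is_bern (B : nat -> rat) : Prop := is_hbern 1 B.

(* p-adic valuation on Q: None stands for +infinity (ord_p 0 = oo). *)
Definition ordq (p : nat) (q : rat) : option int :=
  if q == 0 then None
  else Some ((logn p `|numq q|)%:Z - (logn p `|denq q|)%:Z).

Definition ord_ge (v t : option int) : Prop :=
  match t, v with
  | None, None => True
  | None, Some _ => False
  | Some _, None => True
  | Some t', Some v' => (t' <= v')%R
  end.

Definition congr_pt (p : nat) (t : option int) (a b : rat) : Prop :=
  ord_ge (ordq p (a - b)) t.

(* Main.v *)
Require Import Defs.
From mathcomp Require Import all_boot all_order all_algebra.
From mathcomp Require Import ring.
Import Order.TTheory GRing.Theory Num.Theory.
Local Open Scope ring_scope.

Definition Dn (N j : nat) : nat := (\prod_(k < j.+1) (N + k) ^_ k)%N.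
Definition cn (N j m : nat) : nat :=
  (j ^_ (j - m) * (N + j) ^_ m * \prod_(m.+1 <= k < j) (N + k) ^_ k)%N.
Definition Dq (N j : nat) : rat := (Dn N j)%:R.

Lemma cn_id N j m : (m < j)%N ->
  (cn N j m * Dn N m * ((N + (j - m))`! * m`!) = Dn N j * (N`! * j`!))%N.
Proof.
move=> mj.
have eD : Dn N j = (Dn N m * \prod_(m.+1 <= k < j) (N + k) ^_ k * (N + j) ^_ j)%N.
  rewrite /Dn -!(big_mkord xpredT (fun k => (N + k) ^_ k)).
  have mj1 : (m.+1 <= j.+1)%N by apply: ltnW.
  rewrite [LHS](@big_cat_nat _ _ _ m.+1 0 j.+1 _ _ (leq0n _) mj1) /=.
  by rewrite [in X in (_ * X)%N]big_nat_recr //= mulnA.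
have e1 : (j ^_ (j - m) * m`! = j`!)%N.
  have := ffact_fact (leq_subr m j); rewrite subKn; first by [].
  exact: ltnW.
have e2 : ((N + j) ^_ m * (N + (j - m))`! = (N + j)`!)%N.
  have h : (m <= N + j)%N by rewrite (leq_trans (ltnW mj)) // leq_addl.
  have := ffact_fact h; rewrite -addnBA; first by [].
  exact: ltnW.
have e3 : ((N + j) ^_ j * N`! = (N + j)`!)%N.
  have := @ffact_fact (N + j) j (leq_addl _ _); rewrite addnK; by [].
have e23 : ((N + j) ^_ m * (N + (j - m))`! = (N + j) ^_ j * N`!)%N by rewrite e2 e3.
rewrite eD /cn -e1.
move: e23.
move: (j ^_ (j - m)) (m`!) ((N + j) ^_ m) ((N + (j - m))`!) ((N + j) ^_ j) (N`!)
  (Dn N m) (\prod_(m.+1 <= k < j) (N + k) ^_ k) => a b c d e f g h E.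
have -> : (a * c * h * g * (d * b) = (a * b * g * h) * (c * d))%N by ring.
rewrite E; ring.
Qed.

Lemma B0 {N B} : is_hbern N B -> B 0%N = 1.
Proof.
have nz : ((N`!)%:R : rat) != 0 by rewrite pnatr_eq0 -lt0n fact_gt0.
move=> hb; have := hb 0%N; rewrite big_ord1 /= addn0 mulr1 => H.
by rewrite -[B 0%N](divfK nz) H mul1r mulVf.
Qed.

Lemma Dq0 N : Dq N 0 = 1.
Proof. by rewrite /Dq /Dn big_ord1 ffactn0. Qed.

Lemma rec {N B j} : is_hbern N B -> (0 < j)%N ->
  Dq N j * B j = - \sum_(m < j) (cn N j m)%:R * (Dq N m * B m).
Proof.
move=> hb j0; have := hb j.
rewrite big_ord_recr /= subnn addn0 (negbTE (lt0n_neq0 j0)) mul0r.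
set K : rat := (Dn N j * (N`! * j`!))%:R.
move=> H; have {H} := congr1 (fun x => K * x) H.
rewrite mulr0 mulrDr mulr_sumr => H.
apply/eqP; rewrite -addr_eq0 addrC; apply/eqP; rewrite -[RHS]H.
have nz : forall a, ((a`!)%:R : rat) != 0 by move=> a; rewrite pnatr_eq0 -lt0n fact_gt0.
congr (_ + _).
  apply: eq_bigr => m _.
  rewrite /K -(@cn_id N j m (ltn_ord m)) /Dq !natrM.
  by field; rewrite !nz.
by rewrite /K /Dq !natrM; field; rewrite !nz.
Qed.

Lemma modM d a b c e : a = b %[mod d] -> c = e %[mod d] -> (a * c = b * e %[mod d])%N.
Proof. by move=> h1 h2; rewrite -modnMm h1 h2 modnMm. Qed.

Lemma ffact_cong d N a b : N = 1 %[mod d] -> (b <= a.+1)%N ->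
  (N + a) ^_ b = (1 + a) ^_ b %[mod d].
Proof.
move=> hN; elim: b a => [|b IH] a hb; first by rewrite !ffactn0.
case: a hb => [|a] hb.
  by case: b {IH} hb => // _; rewrite !addn0 !ffactn1.
rewrite !addnS !ffactSS; apply: modM; first by rewrite -!addnS -modnDml hN modnDml.
exact: IH.
Qed.

Lemma cn_cong d N j m : N = 1 %[mod d] -> (m < j)%N -> cn N j m = cn 1 j m %[mod d].
Proof.
move=> hN mj; rewrite /cn; apply: modM; first apply: modM => //.
  by apply: ffact_cong => //; apply: leq_trans (ltnW mj) _.
apply: (big_ind2 (fun x y => x = y %[mod d])) => //.
  by move=> *; apply: modM.
by move=> k _; apply: ffact_cong.
Qed.

Definition Qp (d : int) (x y : rat) :=
  exists z w q : int, [/\ x = z%:~R, y = w%:~R & z - w = q * d].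

Lemma cn_congz N j m : (1 <= N)%N -> (m < j)%N ->
  exists q : int, (cn N j m)%:Z - (cn 1 j m)%:Z = q * (N - 1)%N%:Z.
Proof.
move=> N1 mj; apply/dvdzP; rewrite -eqz_mod_dvd !modz_nat.
rewrite (@cn_cong (N - 1)%N N j m) //.
by rewrite -{1}(subnK N1) modnDl.
Qed.

Lemma main_inv N B Bc : (1 <= N)%N -> is_hbern N B -> is_bern Bc ->
  forall j, Qp (N - 1)%N%:Z (Dq N j * B j) (Dq 1 j * Bc j).
Proof.
move=> N1 hb hbc; elim/ltn_ind => j IH.
case: (posnP j) => [->|j0].
  by rewrite !Dq0 (B0 hb) (B0 hbc); exists 1, 1, 0; split; rewrite ?mulr1 ?subrr ?mul0r.
rewrite (rec hb j0) (rec hbc j0).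
suff [z [w [q [e1 e2 e3]]]] : Qp (N - 1)%N%:Z
   (\sum_(m < j) (cn N j m)%:R * (Dq N m * B m))
   (\sum_(m < j) (cn 1 j m)%:R * (Dq 1 m * Bc m)).
  exists (- z), (- w), (- q); split; rewrite ?e1 ?e2 ?rmorphN //.
  by rewrite mulNr -e3; ring.
apply: (big_ind2 (Qp (N - 1)%N%:Z)).
- by exists 0, 0, 0; split; rewrite ?subrr ?mul0r.
- move=> x1 x2 y1 y2 [z1 [w1 [q1 [a1 a2 a3]]]] [z2 [w2 [q2 [b1 b2 b3]]]].
  exists (z1 + z2), (w1 + w2), (q1 + q2); split; rewrite ?a1 ?a2 ?b1 ?b2 ?rmorphD //.
  by rewrite mulrDl -a3 -b3; ring.
move=> m _; have [z [w [q [e1 e2 e3]]]] := IH m (ltn_ord m).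
have [q' eq'] := cn_congz _ _ _ N1 (ltn_ord m).
exists ((cn N j m)%:Z * z), ((cn 1 j m)%:Z * w), ((cn N j m)%:Z * q + q' * w).
split; [by rewrite e1 intrM | by rewrite e2 intrM |].
move: e3 eq'; move: ((cn N j m)%:Z) ((cn 1 j m)%:Z) => a b e3 eq'.
have -> : a * z - b * w = a * (z - w) + (a - b) * w by ring.
rewrite e3 eq'; ring.
Qed.

Lemma prodG N n : \prod_(k < n.+1) (((N + k)`!)%:R / ((N`!)%:R : rat)) = Dq N n.
Proof.
rewrite /Dq /Dn natr_prod; apply: eq_bigr => k _.
have nz : ((N`!)%:R : rat) != 0 by rewrite pnatr_eq0 -lt0n fact_gt0.
by rewrite -(ffact_fact (leq_addl N k)) addnK natrM mulfK.
Qed.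

Theorem lemma1 (p N n : nat) (B Bc : nat -> rat) :
  prime p -> (1 <= N)%N ->
  is_hbern N B -> is_bern Bc ->
  congr_pt p (ordq p ((N%:R : rat) - 1))
    ((\prod_(k < n.+1) (((N + k)`!)%:R / (N`!)%:R)) * B n)
    ((\prod_(k < n.+1) (((1 + k)`!)%:R : rat)) * Bc n).
Proof.
move=> pp N1 hb hbc.
have P2 : \prod_(k < n.+1) (((1 + k)`!)%:R : rat) = Dq 1 n.
  rewrite -prodG; apply: eq_bigr => k _; by rewrite divr1.
rewrite prodG P2.
have [z [w [q [e1 e2 e3]]]] := main_inv N B Bc N1 hb hbc n.
rewrite e1 e2 /congr_pt -intrB e3 /ordq.
case: (eqVneq (q * (N - 1)%N%:Z) 0) => [->|nz].
  by rewrite rmorph0 eqxx /=; case: ifP.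
rewrite intr_eq0 (negbTE nz) numq_int denq_int.
have N2 : (1 < N)%N.
  rewrite ltn_neqAle N1 andbT; apply/eqP => E; move: nz; rewrite -E subnn mulr0 eqxx //.
have -> : (N%:R : rat) - 1 = ((N - 1)%N%:Z)%:~R.
  by rewrite -pmulrn natrB.
have nz2 : ((N - 1)%N%:Z)%:~R != (0 : rat) by rewrite intr_eq0 eqz_nat subn_eq0 -ltnNge.
rewrite (negbTE nz2) numq_int denq_int /= logn1 !subr0 lez_nat abszM absz_nat.
have qn0 : q != 0 by apply: contra nz => /eqP ->; rewrite mul0r.
apply: dvdn_leq_log; last exact: dvdn_mull.
by rewrite muln_gt0 absz_gt0 qn0 subn_gt0.
Qed.
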